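(* Let $N\le K$ be positive integers with $K\le\frac{N^2+1}{2}$. Then for every $M\in[\frac1K,\frac NK]$, the worst-case rate achieved by the lower convex envelope of the pairs $\left(N-\frac{N}{K}\frac{N+1}{g+1},\frac{N}{Kg}\right)$, $g\in\{1,\dots,N\}$, is no larger than the rate at memory $M$ of the lower convex envelope of the pairs $$(R_{\mathrm{MDS}},M_{\mathrm{MDS}})=\left(\frac{N(K-t)}{K},\ \frac{t\left[(N-1)t+K-N\right]}{K(K-1)}\right),\quad t=0,1,\dots,K.$$
   Context: In the caching setting with $N$ files of $F$ bits, $K$ users each with cache $MF$ bits, and worst-case delivery rate $R^*$ (in units of $F$ bits), the pairs $(R_{\mathrm{MDS}},M_{\mathrm{MDS}})$ above are rate–memory pairs achieved by a previously known scheme (based on MDS and rank-metric codes); the pairs $\left(N-\frac{N}{K}\frac{N+1}{g+1},\frac{N}{Kg}\right)$, $g=1,\dots,N$, are those achieved by the scheme of this paper. The lower convex envelope of a finite set of (rate, memory) points is taken as a function of $M$. *)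

(* Defs.v *)
From HB Require Import structures.
From mathcomp Require Import all_boot all_order all_algebra.
Set Implicit Arguments. Unset Strict Implicit. Unset Printing Implicit Defensive.
Import Order.TTheory GRing.Theory Num.Theory.
Local Open Scope ring_scope.

(* A (rate, memory) pair: first component = rate R, second = memory M. *)

Definition conv_achievable (R : realFieldType) (pts : seq (R * R)) (M r : R) : Prop :=
  exists w : nat -> R,
    [/\ (forall i, (i < size pts)%N -> 0 <= w i),
        \sum_(i < size pts) w i = 1,
        \sum_(i < size pts) w i * (nth (0, 0) pts i).2 = M
      & \sum_(i < size pts) w i * (nth (0, 0) pts i).1 = r].

(* The lower convex envelope of [pts], as a function of M, takes at M the
   minimum of the achievable rates r.  "env_A(M) <= env_B(M)" is thus:
   every rate achievable by B at memory M is dominated by a rate achievable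
   by A at memory M. *)
Definition lce_le (R : realFieldType) (A B : seq (R * R)) (M : R) : Prop :=
  forall r, conv_achievable B M r ->
    exists r', conv_achievable A M r' /\ r' <= r.

Definition new_pts (R : realFieldType) (N K : nat) : seq (R * R) :=
  [seq (N%:R - N%:R / K%:R * ((N + 1)%:R / (g + 1)%:R), N%:R / (K%:R * g%:R))
  | g <- iota 1 N].

Definition mds_pts (R : realFieldType) (N K : nat) : seq (R * R) :=
  [seq ((N%:R * (K%:R - t%:R)) / K%:R,
        (t%:R * ((N%:R - 1) * t%:R + K%:R - N%:R)) / (K%:R * (K%:R - 1)))
  | t <- iota 0 K.+1].

(* Main.v *)
Require Import Defs.
From HB Require Import structures.
From mathcomp Require Import all_boot all_order all_algebra.
From mathcomp Require Import ring lra zify.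
Import Order.TTheory GRing.Theory Num.Theory.
Local Open Scope ring_scope.

Lemma find_g (R : realFieldType) (n : nat) (v : R) :
  1 <= v -> v <= (n.+2)%:R ->
  exists g, [/\ (1 <= g)%N, (g <= n.+1)%N, g%:R <= v & v <= (g+1)%:R].
Proof.
move=> h1; elim: n => [|n IH] h2.
  by exists 1%N; split => //; rewrite addn1.
case: (lerP v (n.+2)%:R) => h3.
  by have [g [? ? ? ?]] := IH h3; exists g; split => //; apply: leqW.
exists n.+2; split => //; first exact: ltW.
by rewrite addn1.
Qed.

Lemma sum2 (R : realFieldType) (n j k : nat) (a b : R) (h : nat -> R) :
  (j < n)%N -> (k < n)%N -> j != k ->
  \sum_(i < n) (if i == j :> nat then a else if i == k :> nat then b else 0) * h i
  = a * h j + b * h k.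
Proof.
move=> hj hk hjk.
rewrite (eq_bigr (fun i : 'I_n => (if i == j :> nat then a * h j else 0)
   + (if i == k :> nat then b * h k else 0))); last first.
  move=> i _; case: eqP => [->|_]; first by rewrite (negbTE hjk) addr0.
  by case: eqP => [->|_]; rewrite ?mul0r ?add0r.
rewrite big_split /= -!big_mkcond /=.
by rewrite (big_ord1_eq _ (fun _ => a * h j)) (big_ord1_eq _ (fun _ => b * h k)) hj hk.
Qed.

Lemma consec_ge0 (R : realFieldType) (N a : nat) :
  0 <= (N%:R - a%:R) * (N%:R + 1 - a%:R :> R).
Proof.
case: (leqP a N) => h.
- have : (a%:R <= N%:R :> R) by rewrite ler_nat.
  move=> h'; nra.
- have : (N%:R + 1 <= a%:R :> R) by rewrite natr1 ler_nat.
  move=> h'; nra.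
Qed.

Lemma tt1_ge0 (R : realFieldType) (t : nat) : 0 <= t%:R * (t%:R - 1 :> R).
Proof.
case: t => [|t]; first by rewrite mul0r.
rewrite -natr1 addrK; apply: mulr_ge0 => //; apply: addr_ge0 => //.
Qed.

Lemma keyP (R : realFieldType) (N K g t : nat) :
  (2 <= N)%N -> (N <= K)%N -> (2 * K <= N ^ 2 + 1)%N -> (1 <= g)%N -> (g < N)%N ->
  0 <= g%:R*(g%:R+1)*(N%:R+1)*t%:R*((N%:R-1)*t%:R+K%:R-N%:R) + N%:R*(N%:R+1)*(K%:R-1)
     - N%:R*t%:R*(g%:R+1)*(g%:R+2)*(K%:R-1) :> R.
Proof.
move=> hN hNK hK hg hgN.
set n := N%:R : R; set k := K%:R : R; set G := g%:R : R; set T := t%:R : R.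
have hn : 2 <= n by rewrite /n (ler_nat R 2).
have hnk : n <= k by rewrite /n /k ler_nat.
have hk : 2 * k <= n ^+ 2 + 1.
  by move: hK; rewrite -(ler_nat R) natrD natrM natrX.
have hG : 1 <= G by rewrite /G (ler_nat R 1).
have hGn : G + 1 <= n by rewrite /G /n natr1 ler_nat.
have -> : G*(G+1)*(n+1)*T*((n-1)*T+k-n) + n*(n+1)*(k-1) - n*T*(G+1)*(G+2)*(k-1)
  = (k-1) * ((n - (g+1)%:R*T) * (n + 1 - (g+1)%:R * T))
    + (G+1) * ((n-1)*(G*n-1) - (k-n)*(G+1)) * (T*(T-1)).
  by rewrite natrD /G; ring.
have hX : 0 <= (n - (g+1)%:R*T) * (n + 1 - (g+1)%:R * T).
  by rewrite /T -natrM; apply: consec_ge0.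
have hT : 0 <= T * (T-1) by apply: tt1_ge0.
have hB : 0 <= (n-1)*(G*n-1) - (k-n)*(G+1).
  have h1 : 2 * ((k-n)*(G+1)) <= (n-1)^+2 * (G+1).
    have : 0 <= G + 1 by lra.
    move=> hG1; nra.
  nra.
apply: addr_ge0; first by apply: mulr_ge0 => //; lra.
apply: mulr_ge0 => //; apply: mulr_ge0 => //; lra.
Qed.

Lemma ptw (R : realFieldType) (N K g t : nat) :
  (2 <= N)%N -> (N <= K)%N -> (2 * K <= N ^ 2 + 1)%N -> (1 <= g)%N -> (g < N)%N ->
  (N%:R - N%:R / K%:R * ((N%:R + 1) / (g%:R + 1)) + (N%:R + 1) * g%:R / (g%:R + 2) * (N%:R / (K%:R * g%:R)))
  - (N%:R + 1) * g%:R / (g%:R + 2) * ((t%:R * ((N%:R - 1) * t%:R + K%:R - N%:R)) / (K%:R * (K%:R - 1)))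
  <= (N%:R * (K%:R - t%:R)) / K%:R :> R.
Proof.
move=> hN hNK hK hg hgN.
have hP := keyP R N K g t hN hNK hK hg hgN.
have kR : 2 <= K%:R :> R by rewrite (ler_nat R 2); clear -hN hNK; lia.
have G1 : 1 <= g%:R :> R by rewrite (ler_nat R 1).
set n := N%:R : R; set k := K%:R : R; set G := g%:R : R; set T := t%:R : R.
rewrite -subr_ge0.
have -> : n * (k - T) / k - ((n - n / k * ((n + 1) / (G + 1)) + (n + 1) * G / (G + 2) * (n / (k * G))) -
   (n + 1) * G / (G + 2) * (T * ((n - 1) * T + k - n) / (k * (k - 1))))
  = (G*(G+1)*(n+1)*T*((n-1)*T+k-n) + n*(n+1)*(k-1) - n*T*(G+1)*(G+2)*(k-1))
    / (k * (k-1) * (G+1) * (G+2)).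
  have k0 : k != 0 by rewrite gt_eqF //; lra.
  have k10 : k - 1 != 0 by rewrite gt_eqF //; lra.
  have G0 : G != 0 by rewrite gt_eqF //; lra.
  have G10 : G + 1 != 0 by rewrite gt_eqF //; lra.
  have G20 : G + 2 != 0 by rewrite gt_eqF //; lra.
  field; by rewrite ?G0 ?G10 ?G20 ?k0 ?k10.
apply: divr_ge0 => //.
apply: mulr_ge0; [apply: mulr_ge0; [apply: mulr_ge0|]|]; lra.
Qed.

Lemma core (R : realFieldType) (N K : nat) (M : R) :
  (2 <= N)%N -> (N <= K)%N -> (2 * K <= N ^ 2 + 1)%N ->
  1 / K%:R <= M -> M <= N%:R / K%:R ->
  exists c0 a : R, conv_achievable (new_pts R N K) M (c0 - a * M) /\
    forall t : nat, (t <= K)%N ->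
      c0 - a * ((t%:R * ((N%:R - 1) * t%:R + K%:R - N%:R)) / (K%:R * (K%:R - 1)))
      <= (N%:R * (K%:R - t%:R)) / K%:R.
Proof.
move=> hN2 hNK hK hM1 hM2.
have kpos : 0 < K%:R :> R by rewrite ltr0n; clear -hNK hN2; lia.
have kR : 2 <= K%:R :> R by rewrite (ler_nat R 2); clear -hNK hN2; lia.
have nR : 2 <= N%:R :> R by rewrite (ler_nat R 2).
have Mpos : 0 < M by apply: lt_le_trans hM1; rewrite divr_gt0.
have hKM1 : 1 <= K%:R * M by rewrite -ler_pdivrMl // mulr1 -[X in X <= _]mul1r.
have hKM2 : K%:R * M <= N%:R by rewrite -ler_pdivlMl // mulrC.
have [g [hg1 hgN hgv hvg]] : exists g, [/\ (1 <= g)%N, (g <= N.-2.+1)%N,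
    g%:R <= N%:R / (K%:R * M) & N%:R / (K%:R * M) <= (g+1)%:R].
  apply: find_g.
    by rewrite ler_pdivlMr ?mul1r // mulr_gt0.
  rewrite ler_pdivrMr ?mulr_gt0 //.
  have -> : N.-2.+2 = N by case: (N) hN2 => [|[|n]].
  by rewrite -[X in X <= _]mulr1 ler_wpM2l // ler0n.
have hgN' : (g < N)%N by clear -hgN hN2; lia.
exists (N%:R - N%:R / K%:R * ((N%:R + 1) / (g%:R + 1)) + (N%:R + 1) * g%:R / (g%:R + 2) * (N%:R / (K%:R * g%:R))).
exists ((N%:R + 1) * g%:R / (g%:R + 2)).
split; last by move=> t ht; apply: ptw.
set n := N%:R : R; set k := K%:R : R; set G := g%:R : R.
have G1 : 1 <= G by rewrite /G (ler_nat R 1).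
have k0 : k != 0 by rewrite gt_eqF.
have G0 : G != 0 by rewrite gt_eqF //; apply: lt_le_trans G1.
have G10 : G + 1 != 0 by rewrite gt_eqF // ltr_wpDl // ?ler01 // (le_trans ler01 G1).
have G20 : G + 2 != 0 by rewrite gt_eqF // ltr_wpDl // (le_trans ler01 G1).
have k10 : k - 1 != 0 by rewrite subr_eq0 gt_eqF //; lra.
have G0' : g%:R != 0 :> R := G0.
have G10' : g%:R + 1 != 0 :> R := G10.
have G20' : g%:R + 2 != 0 :> R := G20.
have k0' : K%:R != 0 :> R := k0.
have k10' : K%:R - 1 != 0 :> R := k10.
have n0' : N%:R != 0 :> R by rewrite gt_eqF //; lra.
have eG1 : (g + 1)%:R = G + 1 :> R by rewrite natrD.
rewrite eG1 in hvg.
set mg := n / (k * G); set mg1 := n / (k * (G + 1)).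
have hMg : M <= mg.
  rewrite /mg ler_pdivlMr ?mulr_gt0 //; try lra.
  by move: hgv; rewrite ler_pdivlMr ?mulr_gt0 // mulrA mulrC (mulrC k).
have hMg1 : mg1 <= M.
  rewrite /mg1 ler_pdivrMr ?mulr_gt0 //; try lra.
  by move: hvg; rewrite ler_pdivrMr ?mulr_gt0 // mulrA mulrC (mulrC k).
have hmm : mg1 < mg.
  have e : mg - mg1 = n / (k * G * (G + 1)).
    rewrite /mg /mg1; field; by rewrite ?G0' ?G10' ?G20' ?k0' ?k10'.
  have : 0 < n / (k * G * (G + 1)) by rewrite divr_gt0 ?mulr_gt0 //; lra.
  lra.
set lam := (M - mg1) / (mg - mg1).
have dpos : 0 < mg - mg1 by lra.
have lam0 : 0 <= lam by rewrite divr_ge0 //; lra.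
have lam1 : lam <= 1 by rewrite ler_pdivrMr //; lra.
have lamM : lam * mg + (1 - lam) * mg1 = M.
  rewrite /lam; field; rewrite gt_eqF //.
set a := (n + 1) * G / (G + 2).
set rg := n - n / k * ((n + 1) / (G + 1)).
set rg1 := n - n / k * ((n + 1) / (G + 2)).
set c0 := rg + a * mg.
have erg1 : rg1 = c0 - a * mg1.
  rewrite /rg1 /c0 /rg /a /mg /mg1; field; by rewrite ?G0' ?G10' ?G20' ?k0' ?k10'.
have nthn : forall i, (i < N)%N -> nth (0, 0) (new_pts R N K) i =
    (n - n / k * ((N + 1)%:R / (i.+1 + 1)%:R), n / (k * (i.+1)%:R)).
  by move=> i hi; rewrite (nth_map 0%N) ?size_iota // nth_iota // add1n.
have hpg : g.-1.+1 = g by rewrite prednK.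
exists (fun i => if i == g.-1 then lam else if i == g then 1 - lam else 0).
have hi1 : (g.-1 < N)%N by clear -hgN' hg1; lia.
have hne : g.-1 != g by clear -hg1; lia.
have hs : size (new_pts R N K) = N by rewrite size_map size_iota.
rewrite hs.
have e1 : (g.+1)%:R = G + 1 :> R by rewrite -addn1 natrD.
have e2 : (g.+1 + 1)%:R = G + 2 :> R by rewrite -addn1 -addnA natrD.
have e3 : (N + 1)%:R = n + 1 :> R by rewrite natrD.
split.
- by move=> i _; case: eqP => _; [|case: eqP => _]; lra.
- transitivity (lam * 1 + (1 - lam) * 1); last by ring.
  rewrite -(@sum2 R N g.-1 g lam (1-lam) (fun _ => 1) hi1 hgN' hne).
  by apply: eq_bigr => i _; rewrite mulr1.
- rewrite (@sum2 R N g.-1 g lam (1-lam) (fun i => (nth (0, 0) (new_pts R N K) i).2) hi1 hgN' hne).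
  rewrite !nthn // /= hpg -/G e1.
  exact: lamM.
- rewrite (@sum2 R N g.-1 g lam (1-lam) (fun i => (nth (0, 0) (new_pts R N K) i).1) hi1 hgN' hne).
  rewrite !nthn // /= hpg -/G e2 e3 eG1.
  have hh : lam * rg + (1 - lam) * rg1 = c0 - a * M.
    by rewrite erg1 -lamM /c0; ring.
  exact: hh.
Qed.

Theorem corollary2 (R : realFieldType) (N K : nat) (M : R) :
  (0 < N)%N -> (N <= K)%N -> (2 * K <= N ^ 2 + 1)%N ->
  1 / K%:R <= M -> M <= N%:R / K%:R ->
  lce_le (new_pts R N K) (mds_pts R N K) M.
Proof.
move=> hN0 hNK hK hM1 hM2 r [w [hw0 hw1 hwM hwr]].
have hs : size (mds_pts R N K) = K.+1 by rewrite size_map size_iota.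
rewrite hs in hw0 hw1 hwM hwr.
have nthm : forall i, (i < K.+1)%N -> nth (0, 0) (mds_pts R N K) i =
  ((N%:R * (K%:R - i%:R)) / K%:R,
        (i%:R * ((N%:R - 1) * i%:R + K%:R - N%:R)) / (K%:R * (K%:R - 1))) :> R * R.
  by move=> i hi; rewrite (nth_map 0%N) ?size_iota // nth_iota // add0n.
case: (leqP N 1) => hN1.
  have eN : N = 1%N by apply/eqP; rewrite eqn_leq hN1.
  have eK : K = 1%N by clear -eN hNK hK; subst N; lia.
  exfalso; move: hwM hM1; subst K.
  rewrite (eq_bigr (fun _ => 0)); last first.
    by move=> i _; rewrite nthm //= subrr mulr0 invr0 !mulr0.
  rewrite big1 // => <-; rewrite divr1; lra.
have [c0 [a [hc hpt]]] := core R N K M hN1 hNK hK hM1 hM2.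
exists (c0 - a * M); split => //.
rewrite -hwr -hwM.
have E : \sum_(i < K.+1) w i * (c0 - a * (nth (0, 0) (mds_pts R N K) i).2)
  = c0 - a * \sum_(i < K.+1) w i * (nth (0, 0) (mds_pts R N K) i).2.
  rewrite (eq_bigr (fun i : 'I_K.+1 => w i * c0 - a * (w i * (nth (0, 0) (mds_pts R N K) i).2))); last by move=> i _; ring.
  by rewrite sumrB -mulr_suml -mulr_sumr hw1 mul1r.
rewrite -E.
apply: ler_sum => i _.
apply: ler_wpM2l; first exact: hw0.
rewrite nthm //=.
apply: hpt; by rewrite -ltnS.
Qed.
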